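(* Let $a\in\mathbb{R}$, $b\in(a,\infty)$, let $p\in C([a,b],[0,\infty))$ be strictly increasing, let $g\in C([a,b],\mathbb{R})$ and $L\in(0,\infty)$ satisfy for all $x,y\in[a,b]$ with $x<y$ that $g(y)-g(x)>3L(y-x)$, and assume $\int_a^bg(x)p(x)\,\mathrm{d}x=0$. Then $L\int_a^bp(x)\,\mathrm{d}x<g(b)p(b)$. *)

(* Defs.v *)
From Stdlib Require Export Reals.
From Coquelicot Require Export Coquelicot.

(* Main.v *)
Require Import Defs.
From Stdlib Require Import Lra.
Open Scope R_scope.

Definition clampR (a b x : R) := Rmax a (Rmin x b).

Lemma clamp_lip a b x y : a <= b -> Rabs (clampR a b y - clampR a b x) <= Rabs (y - x).
Proof.
  intros hab. unfold clampR, Rmax, Rmin.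
  repeat (destruct Rle_dec); unfold Rabs; repeat destruct Rcase_abs; lra.
Qed.

Lemma clamp_in a b x : a <= b -> a <= clampR a b x <= b.
Proof. intros hab. unfold clampR, Rmax, Rmin. repeat destruct Rle_dec; lra. Qed.

Lemma clamp_id a b x : a <= x <= b -> clampR a b x = x.
Proof. intros h. unfold clampR, Rmax, Rmin. repeat destruct Rle_dec; lra. Qed.

Lemma cont_clamp a b f : a <= b -> continuous_on (fun x => a <= x <= b) f ->
  forall x, @continuous R_UniformSpace R_UniformSpace (fun y => f (clampR a b y)) x.
Proof.
  intros hab hf x. unfold continuous.
  apply filterlim_comp with (G := within (fun x => a <= x <= b) (locally (clampR a b x))).
  2: { apply hf. apply clamp_in; auto. }
  intros P [eps HP]. exists eps. intros y hy.
  apply HP. 2: apply clamp_in; auto.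
  unfold ball in *; simpl in *. unfold AbsRing_ball, abs, minus, plus, opp in *; simpl in *.
  pose proof (clamp_lip a b x y hab). unfold Rminus in H. lra.
Qed.

Lemma exint_of a b f F : a <= b -> (forall x, @continuous R_UniformSpace R_UniformSpace F x) ->
  (forall x, a <= x <= b -> F x = f x) -> ex_RInt f a b.
Proof.
  intros hab hF he. apply ex_RInt_ext with F.
  { intros x hx. rewrite Rmin_left in hx by lra. rewrite Rmax_right in hx by lra.
    apply he; lra. }
  apply (@ex_RInt_continuous R_CompleteNormedModule). intros; apply hF.
Qed.

Lemma lin a b (f h : R -> R) al be : ex_RInt f a b -> ex_RInt h a b ->
  is_RInt (fun x => al * f x + be * h x) a b (al * RInt f a b + be * RInt h a b).
Proof.
  intros ef eh.
  exact (@is_RInt_plus R_NormedModule (fun x => scal al (f x)) (fun x => scal be (h x)) a b _ _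
    (@is_RInt_scal R_NormedModule f a b al _ (@RInt_correct R_CompleteNormedModule f a b ef))
    (@is_RInt_scal R_NormedModule h a b be _ (@RInt_correct R_CompleteNormedModule h a b eh))).
Qed.

Lemma lin_ex a b (f h : R -> R) al be : ex_RInt f a b -> ex_RInt h a b ->
  ex_RInt (fun x => al * f x + be * h x) a b.
Proof. intros ef eh. eexists. apply lin; auto. Qed.

Lemma lin_val a b (f h : R -> R) al be : ex_RInt f a b -> ex_RInt h a b ->
  RInt (fun x => al * f x + be * h x) a b = al * RInt f a b + be * RInt h a b.
Proof. intros ef eh. apply is_RInt_unique. apply lin; auto. Qed.

Lemma cont_lin (u v : R) : forall x, @continuous R_UniformSpace R_UniformSpace (fun y => u - v * y) x.
Proof.
  intros x. apply (@ex_derive_continuous R_AbsRing R_NormedModule). auto_derive. auto.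
Qed.

Theorem lemma2p8 (a b L : R) (p g : R -> R)
  (hab : a < b)
  (hpc : continuous_on (fun x => a <= x <= b) p)
  (hp0 : forall x, a <= x <= b -> 0 <= p x)
  (hpinc : forall x y, a <= x -> x < y -> y <= b -> p x < p y)
  (hgc : continuous_on (fun x => a <= x <= b) g)
  (hL : 0 < L)
  (hg : forall x y, a <= x -> x < y -> y <= b -> g y - g x > 3 * L * (y - x))
  (hint : RInt (fun x => g x * p x) a b = 0) :
  L * RInt p a b < g b * p b.
Proof.
  assert (hab' : a <= b) by lra.
  pose proof (cont_clamp a b g hab' hgc) as Gc.
  pose proof (cont_clamp a b p hab' hpc) as Pc.
  assert (eg : ex_RInt g a b).
  { apply (exint_of a b g (fun y => g (clampR a b y))); auto.
    intros; rewrite clamp_id; auto. }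
  assert (ep : ex_RInt p a b).
  { apply (exint_of a b p (fun y => p (clampR a b y))); auto.
    intros; rewrite clamp_id; auto. }
  assert (egp : ex_RInt (fun x => g x * p x) a b).
  { apply (exint_of a b _ (fun y => mult (g (clampR a b y)) (p (clampR a b y)))); auto.
    intros; apply (@continuous_mult R_UniformSpace R_AbsRing); auto.
    intros; rewrite clamp_id; auto. }
  set (k := fun x => (b - x) * p x).
  assert (ek : ex_RInt k a b).
  { apply (exint_of a b k (fun y => mult (b - 1 * y) (p (clampR a b y)))); auto.
    - intros; apply (@continuous_mult R_UniformSpace R_AbsRing); [apply cont_lin | apply Pc].
    - intros x hx. unfold k, mult; simpl. rewrite clamp_id by lra. ring. }
  assert (hpb : 0 < p b).
  { pose proof (hp0 a). pose proof (hpinc a b). lra. }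
  set (P := RInt p a b).
  assert (hP : 0 < P).
  { unfold P. rewrite (@RInt_ext R_CompleteNormedModule p (fun y => p (clampR a b y))).
    - apply RInt_gt_0; [exact hab| |].
      + intros x hx. rewrite clamp_id by lra. pose proof (hp0 a). pose proof (hpinc a x). lra.
      + intros; apply Pc.
    - intros x hx. rewrite Rmin_left, Rmax_right in hx by lra. rewrite clamp_id by lra. reflexivity. }
  assert (hPle : P <= (b - a) * p b).
  { unfold P. replace ((b - a) * p b) with (RInt (fun _ => p b) a b).
    - apply RInt_le; [exact hab'|exact ep|apply (@ex_RInt_const R_NormedModule)|].
      intros x hx. pose proof (hpinc x b). lra.
    - rewrite (@RInt_const R_CompleteNormedModule). reflexivity. }
  set (w := P / p b).
  assert (hw : w * p b = P) by (unfold w; field; lra).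
  assert (hw0 : 0 < w) by (unfold w; apply Rdiv_lt_0_compat; lra).
  assert (hwb : w <= b - a).
  { destruct (Rle_or_lt w (b - a)) as [h|h]; auto.
    assert (w * p b > (b - a) * p b) by (apply Rmult_lt_compat_r; lra). lra. }
  set (c := b - w).
  set (j := fun x => 1 * k x + (- w) * p x).
  assert (ej : ex_RInt j a b) by (apply lin_ex; auto).
  assert (Jv : @eq R (RInt j a b) (RInt k a b - w * P)).
  { unfold j. rewrite lin_val by auto. fold P. ring. }
  assert (ej1 : ex_RInt j a c) by (apply (@ex_RInt_Chasles_1 R_CompleteNormedModule j a c b); [unfold c; lra|exact ej]).
  assert (ej2 : ex_RInt j c b) by (apply (@ex_RInt_Chasles_2 R_CompleteNormedModule j a c b); [unfold c; lra|exact ej]).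
  assert (Ch : @eq R (RInt j a c + RInt j c b) (RInt j a b)) by exact (@RInt_Chasles R_CompleteNormedModule j a c b ej1 ej2).
  assert (J1 : 0 <= RInt j a c).
  { apply RInt_ge_0; [unfold c; lra|exact ej1|]. intros x hx. unfold j, k.
    assert (0 <= p x) by (apply hp0; unfold c in hx; lra).
    assert (0 < b - x - w) by (unfold c in hx; lra).
    replace (1 * ((b - x) * p x) + - w * p x) with ((b - x - w) * p x) by ring.
    apply Rmult_le_pos; lra. }
  set (u := (b - w) * p b).
  set (d := fun x => u - p b * x).
  set (Fd := fun x => u * x - p b * x ^ 2 / 2).
  assert (Id : is_RInt d c b (minus (Fd b) (Fd c))).
  { apply (@is_RInt_derive R_CompleteNormedModule Fd d c b).
    - intros x _. unfold Fd, d. auto_derive; auto. field.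
    - intros x _. apply cont_lin. }
  assert (J2 : RInt d c b <= RInt j c b).
  { apply RInt_le; [unfold c; lra| eexists; exact Id | exact ej2 |]. intros x hx. unfold d, j, k, u.
    assert (p x <= p b) by (apply Rlt_le, hpinc; unfold c in hx; lra).
    assert (b - x - w <= 0) by (unfold c in hx; lra).
    assert (0 <= (-(b - x - w)) * (p b - p x)) by (apply Rmult_le_pos; lra).
    lra. }
  assert (Dv : @eq R (RInt d c b) (- (p b * w * w / 2))).
  { rewrite (is_RInt_unique _ _ _ _ Id). unfold minus, plus, opp, Fd, u, c; simpl. field. }
  assert (K2 : RInt k a b >= w * P / 2).
  { assert (p b * w * w = w * P) by (rewrite <- hw; ring). lra. }
  set (m := fun x => g b * p x + (-3 * L) * k x).
  assert (em : ex_RInt m a b) by (apply lin_ex; auto).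
  assert (A : RInt (fun x => g x * p x) a b <= RInt m a b).
  { apply RInt_le; [exact hab'|exact egp|exact em|]. intros x hx. unfold m, k.
    assert (h1 := hg x b ltac:(lra) ltac:(lra) ltac:(lra)).
    assert (0 <= p x) by (apply hp0; lra).
    assert (0 <= (g b - g x - 3 * L * (b - x)) * p x) by (apply Rmult_le_pos; lra).
    lra. }
  assert (Mv : @eq R (RInt m a b) (g b * P - 3 * L * RInt k a b)).
  { unfold m. rewrite lin_val by auto. fold P. ring. }
  rewrite hint, Mv in A.
  assert (h3 : 3 * L * RInt k a b >= 3 * L * (w * P / 2)) by (apply Rmult_ge_compat_l; lra).
  assert (h4 : g b >= 3 / 2 * L * w).
  { destruct (Rle_or_lt (3 / 2 * L * w) (g b)) as [h|h]; [lra|].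
    assert (g b * P < 3 / 2 * L * w * P) by (apply Rmult_lt_compat_r; lra). lra. }
  assert (h5 : g b * p b >= 3 / 2 * L * w * p b) by (apply Rmult_ge_compat_r; lra).
  assert (h6 : 0 < L * P) by (apply Rmult_lt_0_compat; lra).
  assert (h7 : 3 / 2 * L * w * p b = 3 / 2 * L * P) by (rewrite <- hw; ring).
  lra.
Qed.
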